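(* Let $G$ be a graph with a single vertex and a single face cellularly embedded in a closed oriented surface $S$ of genus $g\ge2$, let $\omega,\eta$ be the co-boundaries defined in the context, and let $\alpha$ be a potential from which $\omega$ derives. Then for every closed walk $c$ in $\widetilde G$, \[A(c)=\sum_{e=xy\in c}\frac{\alpha(x)+\alpha(y)}{2}\,\eta(p(e)),\] where the sum runs over the successive arcs $e$ of $c$, with $x$ and $y$ the tail and head of $e$.
   Context: $G$ has one vertex and $2g$ loop edges; $\overset{\leftrightarrow}{L}$ is its set of arcs (two opposite arcs $e,\bar e$ per edge). $p:\widetilde S\to S$ is the universal covering and $\widetilde G=p^{-1}(G)$, whose faces tile the plane $\widetilde S$; $\widetilde V=p^{-1}(\text{vertex})$. A co-boundary is a map $\omega:\overset{\leftrightarrow}{L}\to\mathbb R$ with $\omega(\bar e)=-\omega(e)$. A co-boundary $\omega$ derives from a potential $\alpha:\widetilde V\to\mathbb R$ if $\omega(p(v_1v_2))=\alpha(v_2)-\alpha(v_1)$ for every arc $v_1v_2$ of $\widetilde G$. Fix a face $D$ of $\widetilde G$ with counterclockwise boundary arcs $(e_1,\dots,e_{4g})$ (identified with their projections); there exist indices $1\le i<j<k<l\le 4g$ with $e_k=\bar e_i$ and $e_l=\bar e_j$. Set $\omega(e_i)=-\omega(e_k)=1$ and $\omega=0$ on all other arcs, and $\eta(e_j)=-\eta(e_l)=1$ and $\eta=0$ on all other arcs. For a closed walk $c$ in $\widetilde G$, $A(c)=\sum_f\mathrm{wind}(c,f)$, summing over faces $f$ of $\widetilde G$ the winding number of $c$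 around an interior point of $f$ (signed area). *)

(* Defs.v *)
From HB Require Import structures.
From mathcomp Require Import all_boot all_order all_algebra all_fingroup.
From mathcomp Require Import boolp reals.
From Stdlib Require Import Relations.

Set Implicit Arguments.
Unset Strict Implicit.
Unset Printing Implicit Defensive.
Import Order.TTheory GRing.Theory Num.Theory.
Local Open Scope ring_scope.

(** Arcs of G: an edge index x : 'I_(2g) together with an orientation bit;
    (x, true) and (x, false) are the two opposite arcs of edge x. *)
Definition arcT (g : nat) : finType := ('I_(2 * g) * bool)%type.

Definition rev_arc (g : nat) (a : arcT g) : arcT g := (a.1, ~~ a.2).

(** The embedding of G in the oriented surface S is given by its rotation
    system: sigma is the counterclockwise cyclic order of the arcs (viewed as
    leaving the single vertex) around the vertex.  The counterclockwise
    face-boundary successor of an arc d (the next arc after d on the boundary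
    of the face lying to the left of d) is sigma^-1 (rev d). *)
Definition face_succ (g : nat) (sigma : {perm arcT g}) (d : arcT g) : arcT g :=
  (sigma^-1)%g (rev_arc d).

(** Counterclockwise boundary arcs e_0, ..., e_(4g-1) of the face, starting at
    the arc d0 (0-based indexing; the paper uses e_1..e_4g). *)
Definition bd_arc (g : nat) (sigma : {perm arcT g}) (d0 : arcT g) (m : nat)
  : arcT g := iter m (face_succ sigma) d0.

Definition bd_word (g : nat) (sigma : {perm arcT g}) (d0 : arcT g)
  : seq (arcT g) := mkseq (bd_arc sigma d0) (4 * g).

(** Its vertices are the elements of pi_1(S) = < arcs | a.(rev a) = 1, r = 1 >
    (r the face boundary word), represented as words in the arcs modulo the
    congruence [pi_eqv r] below.  The arc of \tilde G lifting a : arc with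
    tail [u] has head [u ++ [:: a]]. *)
Inductive pi_step (g : nat) (r : seq (arcT g)) : seq (arcT g) -> seq (arcT g) -> Prop :=
  | pi_free (u v : seq (arcT g)) (a : arcT g) :
      pi_step r (u ++ a :: rev_arc a :: v) (u ++ v)
  | pi_rel (u v : seq (arcT g)) :
      pi_step r (u ++ r ++ v) (u ++ v).

Definition pi_eqv (g : nat) (r : seq (arcT g)) : relation (seq (arcT g)) :=
  clos_refl_sym_trans _ (pi_step r).

Definition same_vertex (g : nat) (r : seq (arcT g)) (u v : seq (arcT g)) : bool :=
  `[< pi_eqv r u v >].

(** Integer 1-chain of the walk in \tilde G starting at vertex [gamma] and
    following the arcs [s] (the walk's arcs are the lifts), evaluated on the
    edge of \tilde G with tail [delta] and label x (oriented by (x,true)). *)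
Fixpoint walk_chain (g : nat) (r : seq (arcT g)) (gamma s : seq (arcT g))
  (delta : seq (arcT g)) (x : 'I_(2 * g)) : int :=
  match s with
  | [::] => 0
  | a :: s' =>
      (if (a == ((x, true) : arcT g)) && same_vertex r gamma delta then 1 else 0)
    - (if (a == ((x, false) : arcT g)) && same_vertex r (rcons gamma a) delta
       then 1 else 0)
    + walk_chain r (rcons gamma a) s' delta x
  end.

(** Faces of \tilde G are the lifts beta.D of the face of G, one for each
    vertex beta, with counterclockwise boundary the closed walk from beta
    along r.  A 2-chain is a finite list of (face, coefficient) pairs. *)
Definition face_chain (g : nat) (r : seq (arcT g)) (L : seq (seq (arcT g) * int))
  (delta : seq (arcT g)) (x : 'I_(2 * g)) : int :=
  \sum_(p <- L) p.2 * walk_chain r p.1 r delta x.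

Definition bounds (g : nat) (r : seq (arcT g)) (L : seq (seq (arcT g) * int))
  (gamma s : seq (arcT g)) : Prop :=
  forall delta x, face_chain r L delta x = walk_chain r gamma s delta x.

(** Signed area A(c) = sum_f wind(c, f): the winding number of the closed walk
    c around face f is the coefficient of f in the (unique) finitely supported
    2-chain whose boundary is c.  [signed_area r gamma s a] says A(c) = a. *)
Definition signed_area (R : realType) (g : nat) (r : seq (arcT g))
  (gamma s : seq (arcT g)) (a : R) : Prop :=
  exists L, bounds r L gamma s /\ a = (\sum_(p <- L) p.2)%:~R.

Definition pair_cochain (R : realType) (g : nat) (sigma : {perm arcT g})
  (d0 : arcT g) (i k : nat) (a : arcT g) : R :=
  if a == bd_arc sigma d0 i then 1
  else if a == bd_arc sigma d0 k then -1 else 0.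

Fixpoint walk_sum (R : realType) (g : nat) (alpha : seq (arcT g) -> R)
  (eta : arcT g -> R) (gamma s : seq (arcT g)) : R :=
  match s with
  | [::] => 0
  | a :: s' =>
      (alpha gamma + alpha (rcons gamma a)) / 2 * eta a
      + walk_sum alpha eta (rcons gamma a) s'
  end.

(* Main.v *)
Require Import Defs.
From HB Require Import structures.
From mathcomp Require Import all_boot all_order all_algebra all_fingroup.
From mathcomp Require Import boolp reals.
From mathcomp Require Import ring zify.
From Stdlib Require Import Relations.
Import Order.TTheory GRing.Theory Num.Theory.
Set Implicit Arguments.
Unset Strict Implicit.
Unset Printing Implicit Defensive.
Local Open Scope ring_scope.

Lemma pi_eqv_refl g (r : seq (arcT g)) u : pi_eqv r u u.
Proof. exact: rst_refl. Qed.
Lemma pi_eqv_sym g (r : seq (arcT g)) u v : pi_eqv r u v -> pi_eqv r v u.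
Proof. exact: rst_sym. Qed.
Lemma pi_eqv_trans g (r : seq (arcT g)) u v w :
  pi_eqv r u v -> pi_eqv r v w -> pi_eqv r u w.
Proof. exact: rst_trans. Qed.

Lemma pi_step_catr g (r : seq (arcT g)) u v w :
  pi_step r u v -> pi_step r (u ++ w) (v ++ w).
Proof.
case=> [u' v' a|u' v'].
  by rewrite -!catA /=; apply: pi_free.
by rewrite -!catA; apply: pi_rel.
Qed.

Lemma pi_eqv_catr g (r : seq (arcT g)) u v w :
  pi_eqv r u v -> pi_eqv r (u ++ w) (v ++ w).
Proof.
elim=> [x y H|x|x y _ IH|x y z _ IH1 _ IH2].
- by apply: rst_step; apply: pi_step_catr.
- exact: rst_refl.
- exact: rst_sym.
- exact: rst_trans IH1 IH2.
Qed.

Lemma pi_eqv_rcons g (r : seq (arcT g)) u v a :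
  pi_eqv r u v -> pi_eqv r (rcons u a) (rcons v a).
Proof. by rewrite -!cats1; apply: pi_eqv_catr. Qed.

Lemma svP g (r : seq (arcT g)) u v : reflect (pi_eqv r u v) (same_vertex r u v).
Proof. exact: asboolP. Qed.

Lemma sv_eq g (r : seq (arcT g)) u u' v : pi_eqv r u u' ->
  same_vertex r u v = same_vertex r u' v.
Proof.
move=> H; apply/idP/idP => /svP H2; apply/svP.
  exact: pi_eqv_trans (pi_eqv_sym H) H2.
exact: pi_eqv_trans H H2.
Qed.

Lemma walk_chain_eqv g (r : seq (arcT g)) gamma gamma' s delta x :
  pi_eqv r gamma gamma' ->
  walk_chain r gamma s delta x = walk_chain r gamma' s delta x.
Proof.
elim: s gamma gamma' => [//|a s IH] gamma gamma' H /=.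
rewrite (sv_eq _ H) (sv_eq _ (pi_eqv_rcons a H)) (IH _ (rcons gamma' a)) //.
exact: pi_eqv_rcons.
Qed.

Lemma walk_chain_cat g (r : seq (arcT g)) gamma s1 s2 delta x :
  walk_chain r gamma (s1 ++ s2) delta x =
  walk_chain r gamma s1 delta x + walk_chain r (gamma ++ s1) s2 delta x.
Proof.
elim: s1 gamma => [|a s1 IH] gamma /=; first by rewrite cats0 add0r.
by rewrite IH cat_rcons addrA.
Qed.

Lemma walk_chain_back g (r : seq (arcT g)) u a delta x :
  walk_chain r u [:: a; rev_arc a] delta x = 0.
Proof.
have E : pi_eqv r (rcons (rcons u a) (rev_arc a)) u.
  apply: rst_step; rewrite -!cats1 -catA /=.
  by have := pi_free r u [::] a; rewrite cats0.
rewrite /= (sv_eq _ E); move: E => _.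
case: a => y b /=; rewrite /rev_arc /= !xpair_eqE.
by case: b => /=; rewrite ?andbT ?andbF /= ?subr0 ?sub0r ?addr0;
  case: (y == x) => /=; rewrite ?subrr ?add0r ?addr0 ?subr0 ?opprK ?addNr.
Qed.

Lemma face_chain_cat g (r : seq (arcT g)) L1 L2 delta x :
  face_chain r (L1 ++ L2) delta x = face_chain r L1 delta x + face_chain r L2 delta x.
Proof. by rewrite /face_chain big_cat. Qed.

Lemma face_chain_neg g (r : seq (arcT g)) L delta x :
  face_chain r (map (fun p => (p.1, - p.2)) L) delta x = - face_chain r L delta x.
Proof.
rewrite /face_chain big_map -sumrN; apply: eq_bigr => p _ /=; by rewrite mulNr.
Qed.

Lemma exists_bound g (r : seq (arcT g)) w1 w2 : pi_eqv r w1 w2 ->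
  exists L, forall delta x, face_chain r L delta x =
    walk_chain r [::] w1 delta x - walk_chain r [::] w2 delta x.
Proof.
elim=> [x y H|x|x y _ [L IH]|x y z _ [L1 IH1] _ [L2 IH2]].
- case: H => [u v a|u v].
  + exists [::] => delta z; rewrite /face_chain big_nil.
    have -> : u ++ [:: a, rev_arc a & v] = u ++ [:: a; rev_arc a] ++ v by [].
    rewrite !walk_chain_cat.
    have -> : walk_chain r ([::] ++ u) [:: a; rev_arc a] delta z = 0 by apply: walk_chain_back.
    rewrite add0r !cat0s.
    rewrite (@walk_chain_eqv _ _ (u ++ [:: a; rev_arc a]) u); first by rewrite subrr.
    apply: rst_step; have := pi_free r u [::] a; by rewrite !cats0.
  + exists [:: (u, 1%:Z)] => delta z.
    rewrite /face_chain big_seq1 /= mul1r !walk_chain_cat /=.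
    rewrite (@walk_chain_eqv _ _ (u ++ r) u).
      by rewrite addrCA addrK.
    apply: rst_step; have := pi_rel r u [::]; by rewrite !cats0.
- by exists [::] => delta z; rewrite /face_chain big_nil subrr.
- exists (map (fun p => (p.1, - p.2)) L) => delta z.
  by rewrite face_chain_neg IH opprB.
- exists (L1 ++ L2) => delta w.
  by rewrite face_chain_cat IH1 IH2 addrA subrK.
Qed.

Lemma exists_bounds g (r : seq (arcT g)) gamma s :
  pi_eqv r (gamma ++ s) gamma -> exists L, bounds r L gamma s.
Proof.
move=> /exists_bound [L HL]; exists L => delta x.
by rewrite HL -(cat0s gamma) walk_chain_cat addrC addKr.
Qed.


Fixpoint dedupe (T : eqType) (e : rel T) (V : seq T) : seq T :=
  match V with
  | [::] => [::]
  | v :: V' => let D := dedupe e V' in if has (e v) D then D else v :: D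
  end.

Lemma has_dedupe (T : eqType) (e : rel T) (V : seq T) u :
  (forall a b, e a b -> e b a) -> (forall a b c, e a b -> e b c -> e a c) ->
  has (e u) (dedupe e V) = has (e u) V.
Proof.
move=> Hs Ht; elim: V => [//|v V IH] /=.
case: ifP => [/hasP [d dD evd]|_] /=; last by rewrite IH.
rewrite IH; case Euv: (e u v) => //=.
rewrite -IH; apply/hasP; exists d => //; exact: Ht Euv evd.
Qed.

Lemma sum_dedupe (R : ringType) (T : eqType) (e : rel T) (V : seq T) u (h : T -> R) :
  (forall a b, e a b -> e b a) -> (forall a b c, e a b -> e b c -> e a c) ->
  (forall a b, e a b -> h a = h b) ->
  \sum_(d <- dedupe e V) (e u d)%:R * h d = if has (e u) V then h u else 0.
Proof.
move=> Hs Ht Hh; elim: V => [|v V IH] /=; first by rewrite big_nil.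
case: ifP => [/hasP [d dD evd]|Hv].
  rewrite IH; case Euv: (e u v) => //=.
  case: ifP => // /negbT Hn; exfalso; move/negP: Hn; apply.
  rewrite -(has_dedupe _ _ Hs Ht); apply/hasP; exists d => //; exact: Ht Euv evd.
rewrite big_cons IH; case Euv: (e u v) => /=.
  have -> : has (e u) V = false.
    apply/negP; rewrite -(has_dedupe _ _ Hs Ht) => /hasP [d dD eud].
    move/negP: Hv; apply; apply/hasP; exists d => //; exact: Ht (Hs _ _ Euv) eud.
  by rewrite mul1r addr0 (Hh _ _ Euv).
by rewrite mul0r add0r.
Qed.

Definition wgt (R : realType) g (alpha : seq (arcT g) -> R) (eta : arcT g -> R)
  (d : seq (arcT g)) (x : 'I_(2 * g)) : R :=
  (alpha d + alpha (rcons d ((x, true) : arcT g))) / 2 * eta (x, true).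

Definition Phi (R : realType) g (alpha : seq (arcT g) -> R) (eta : arcT g -> R)
  (D : seq (seq (arcT g))) (f : seq (arcT g) -> 'I_(2 * g) -> int) : R :=
  \sum_(d <- D) \sum_(x < 2 * g) (f d x)%:~R * wgt alpha eta d x.

Fixpoint wverts g (gamma s : seq (arcT g)) : seq (seq (arcT g)) :=
  gamma :: match s with [::] => [::] | a :: s' => wverts (rcons gamma a) s' end.

Lemma sv_sym g (r : seq (arcT g)) a b : same_vertex r a b -> same_vertex r b a.
Proof. by move/asboolP => H; apply/asboolP; apply: rst_sym. Qed.
Lemma sv_trans g (r : seq (arcT g)) a b c :
  same_vertex r a b -> same_vertex r b c -> same_vertex r a c.
Proof. by move/asboolP => H /asboolP H2; apply/asboolP; apply: rst_trans H H2. Qed.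
Lemma sv_refl g (r : seq (arcT g)) a : same_vertex r a a.
Proof. by apply/asboolP; apply: rst_refl. Qed.

Lemma sum_pick (R : ringType) g (a : arcT g) (b : bool) (F : 'I_(2 * g) -> R) :
  \sum_(x < 2 * g) (a == ((x, b) : arcT g))%:R * F x = if a.2 == b then F a.1 else 0.
Proof.
case: a => y c /=; rewrite (bigD1 y) //= big1 ?addr0.
  by rewrite xpair_eqE eqxx /=; case: (c == b); rewrite ?mul1r ?mul0r.
move=> x Hx; rewrite xpair_eqE eq_sym (negbTE Hx) /= mul0r //.
Qed.

Lemma Phi_walk (R : realType) g (r : seq (arcT g)) (alpha : seq (arcT g) -> R)
  (eta : arcT g -> R) V gamma s :
  (forall u v, pi_eqv r u v -> alpha u = alpha v) ->
  (forall u v b, pi_eqv r u v -> alpha (rcons u b) = alpha (rcons v b)) ->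
  (forall u a, alpha (rcons (rcons u a) (rev_arc a)) = alpha u) ->
  (forall a, eta (rev_arc a) = - eta a) ->
  (forall v, v \in wverts gamma s -> has (same_vertex r v) V) ->
  Phi alpha eta (dedupe (same_vertex r) V) (walk_chain r gamma s) =
  walk_sum alpha eta gamma s.
Proof.
move=> Hal Hw Hrev Heta.
have Hs := @sv_sym g r; have Ht := @sv_trans g r.
have Hh : forall x a b, same_vertex r a b -> wgt alpha eta a x = wgt alpha eta b x.
  move=> x a b /asboolP E; rewrite /wgt (Hal _ _ E) (Hw _ _ _ E) //.
elim: s gamma => [|a s IH] gamma Hc /=.
  by rewrite /Phi big1 // => d _; rewrite big1 // => x _; rewrite mul0r.
rewrite -IH; last by move=> v Hv; apply: Hc; rewrite /= in_cons Hv orbT.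
rewrite /Phi.
have E1 : forall d x,
  ((if (a == ((x, true) : arcT g)) && same_vertex r gamma d then 1 else 0)
   - (if (a == ((x, false) : arcT g)) && same_vertex r (rcons gamma a) d then 1 else 0)
   + walk_chain r (rcons gamma a) s d x)%:~R * wgt alpha eta d x =
  (a == ((x, true) : arcT g))%:R * ((same_vertex r gamma d)%:R * wgt alpha eta d x)
  - (a == ((x, false) : arcT g))%:R * ((same_vertex r (rcons gamma a) d)%:R * wgt alpha eta d x)
  + (walk_chain r (rcons gamma a) s d x)%:~R * wgt alpha eta d x.
  move=> d x; rewrite intrD intrB mulrDl mulrBl; congr (_ - _ + _).
    by case: (a == _); case: (same_vertex _ _ _); rewrite /= ?mul1r ?mul0r.
  by case: (a == _); case: (same_vertex _ _ _); rewrite /= ?mul1r ?mul0r.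
have Hg : has (same_vertex r gamma) V by apply: Hc; rewrite /= in_cons eqxx.
have Hg' : has (same_vertex r (rcons gamma a)) V.
  by apply: Hc; rewrite /= in_cons; case: (s) => [|? ?]; rewrite /= in_cons eqxx orbT.
have Sum : forall (b : bool) u, has (same_vertex r u) V ->
  \sum_(d <- dedupe (same_vertex r) V) \sum_(x < 2 * g)
     (a == ((x, b) : arcT g))%:R * ((same_vertex r u d)%:R * wgt alpha eta d x)
  = if a.2 == b then wgt alpha eta u a.1 else 0.
  move=> b u Hu; rewrite exchange_big /= -sum_pick; apply: eq_bigr => x _.
  by rewrite -mulr_sumr sum_dedupe // ?Hu // => ? ? ?; apply: Hh.
rewrite [LHS](eq_bigr (fun d => \sum_(x < 2 * g) (
  (a == ((x, true) : arcT g))%:R * ((same_vertex r gamma d)%:R * wgt alpha eta d x)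
  - (a == ((x, false) : arcT g))%:R * ((same_vertex r (rcons gamma a) d)%:R * wgt alpha eta d x)
  + (walk_chain r (rcons gamma a) s d x)%:~R * wgt alpha eta d x))); last first.
  by move=> d _; apply: eq_bigr => x _; rewrite /= E1.
rewrite [LHS](eq_bigr (fun d =>
  \sum_(x < 2 * g) (a == ((x, true) : arcT g))%:R * ((same_vertex r gamma d)%:R * wgt alpha eta d x)
  - \sum_(x < 2 * g) (a == ((x, false) : arcT g))%:R * ((same_vertex r (rcons gamma a) d)%:R * wgt alpha eta d x)
  + \sum_(x < 2 * g) (walk_chain r (rcons gamma a) s d x)%:~R * wgt alpha eta d x)); last first.
  by move=> d _; rewrite big_split /= sumrB.
rewrite big_split /= sumrB !Sum //; congr (_ + _).
case: a {E1 Hg Hg' Hc IH Sum} => y b /=; case: b => /=; rewrite ?subr0 /wgt //.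
rewrite sub0r.
have := Hrev gamma (y, false); rewrite /rev_arc /= => ->.
have := Heta (y, false); rewrite /rev_arc /= => ->.
by rewrite mulrN opprK addrC.
Qed.


Lemma walk_sum_rcons (R : realType) g (alpha : seq (arcT g) -> R) eta beta s a :
  walk_sum alpha eta beta (rcons s a) = walk_sum alpha eta beta s +
  (alpha (beta ++ s) + alpha (rcons (beta ++ s) a)) / 2 * eta a.
Proof.
elim: s beta => [|b s IH] beta /=; first by rewrite cats0 addr0 add0r.
by rewrite IH cat_rcons addrA.
Qed.

Lemma alpha_cat (R : realType) g (alpha : seq (arcT g) -> R) (omega : arcT g -> R) beta s :
  (forall u a, alpha (rcons u a) - alpha u = omega a) ->
  alpha (beta ++ s) = alpha beta + \sum_(a <- s) omega a.
Proof.
move=> H; elim/last_ind: s => [|s a IH]; first by rewrite cats0 big_nil addr0.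
rewrite -rcons_cat big_rcons /= addrA -IH.
by have := H (beta ++ s) a; move/eqP; rewrite subr_eq addrC => /eqP.
Qed.

Lemma walk_sum_mkseq (R : realType) g (alpha : seq (arcT g) -> R) eta beta f n :
  walk_sum alpha eta beta (mkseq f n) =
  \sum_(m < n) (alpha (beta ++ mkseq f m) + alpha (rcons (beta ++ mkseq f m) (f m))) / 2 * eta (f m).
Proof.
elim: n => [|n IH]; first by rewrite big_ord0.
by rewrite mkseqS walk_sum_rcons IH big_ord_recr.
Qed.

Lemma sum_delta (R : realType) N (c : nat -> R) j : (j < N)%N ->
  \sum_(m < N) c m * ((m : nat) == j)%:R = c j.
Proof.
move=> H; rewrite (bigD1 (Ordinal H)) //= eqxx mulr1 big1 ?addr0 // => m Hm.
suff -> : (m == j :> nat) = false by rewrite mulr0.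
by apply/negbTE; apply: contra Hm => /eqP E; apply/eqP; apply: val_inj.
Qed.

Lemma sum_ind (R : realType) m i :
  \sum_(n < m) (((n : nat) == i)%:R : R) = (i < m)%:R.
Proof.
elim: m => [|m IH]; first by rewrite big_ord0.
rewrite big_ord_recr /= IH ltnS.
by case: (ltngtP i m) => _; rewrite /= ?addr0 ?add0r.
Qed.

Lemma bd_inj g (sigma : {perm arcT g}) d0 m n :
  (forall a b : arcT g, fconnect (face_succ sigma) a b) ->
  (m < 4 * g)%N -> (n < 4 * g)%N -> bd_arc sigma d0 m = bd_arc sigma d0 n -> m = n.
Proof.
move=> Hf Hm Hn E.
have Ho : fingraph.order (face_succ sigma) d0 = (4 * g)%N.
  rewrite /fingraph.order (@eq_card _ _ predT); last by move=> b; rewrite !inE Hf.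
  rewrite card_prod card_ord card_bool mulnC mulnA //.
rewrite -(findex_iter (f := face_succ sigma) (x := d0) (i := m)) ?Ho //.
by rewrite -(findex_iter (f := face_succ sigma) (x := d0) (i := n)) ?Ho // -/(bd_arc _ _ _) E.
Qed.


Lemma bd_eq g (sigma : {perm arcT g}) d0 m n :
  (forall a b : arcT g, fconnect (face_succ sigma) a b) ->
  (m < 4 * g)%N -> (n < 4 * g)%N ->
  (bd_arc sigma d0 m == bd_arc sigma d0 n) = (m == n).
Proof.
move=> Hf Hm Hn; apply/eqP/eqP => [|->] //; exact: bd_inj.
Qed.

Lemma pc_val (R : realType) g (sigma : {perm arcT g}) d0 i k n :
  (forall a b : arcT g, fconnect (face_succ sigma) a b) ->
  (i < k)%N -> (k < 4 * g)%N -> (n < 4 * g)%N ->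
  pair_cochain R sigma d0 i k (bd_arc sigma d0 n) = (n == i)%:R - (n == k)%:R.
Proof.
move=> Hf Hik Hk Hn; rewrite /pair_cochain !bd_eq //; last by lia.
case: (eqVneq n i) => [->|_].
  by rewrite (ltn_eqF Hik) subr0.
case: (n == k).
- by rewrite /= sub0r.
- by rewrite subrr.
Qed.

Lemma face_value (R : realType) g (sigma : {perm arcT g}) d0 i j k l
  (alpha : seq (arcT g) -> R) beta :
  (forall a b : arcT g, fconnect (face_succ sigma) a b) ->
  (i < j)%N -> (j < k)%N -> (k < l)%N -> (l < 4 * g)%N ->
  (forall (u : seq (arcT g)) (a : arcT g),
      alpha (rcons u a) - alpha u = pair_cochain R sigma d0 i k a) ->
  walk_sum alpha (pair_cochain R sigma d0 j l) beta (bd_word sigma d0) = 1.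
Proof.
move=> Hf Hij Hjk Hkl Hl Hinc.
have HS : forall m, (m <= 4 * g)%N ->
  \sum_(a <- mkseq (bd_arc sigma d0) m) pair_cochain R sigma d0 i k a
  = (i < m)%:R - (k < m)%:R.
  move=> m Hm; rewrite /mkseq big_map -(subn0 m) -/(index_iota 0 m) big_mkord subn0.
  rewrite (eq_bigr (fun n : 'I_m => ((n : nat) == i)%:R - ((n : nat) == k)%:R)).
    by rewrite sumrB !sum_ind.
  move=> n _; apply: pc_val => //; try lia.
  by have := ltn_ord n; lia.
have Hr : forall u a, alpha (rcons u a) = alpha u + pair_cochain R sigma d0 i k a.
  by move=> u a; rewrite -(Hinc u a) addrC subrK.
rewrite /bd_word walk_sum_mkseq.
rewrite (eq_bigr (fun m : 'I_(4 * g) =>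
   (alpha beta + ((i < m)%:R - (k < m)%:R) + (alpha beta + ((i < m)%:R - (k < m)%:R)
     + (((m : nat) == i)%:R - ((m : nat) == k)%:R))) / 2 *
   (((m : nat) == j)%:R - ((m : nat) == l)%:R))); last first.
  move=> m _; have Hm := ltn_ord m.
  rewrite Hr (@alpha_cat _ _ _ (pair_cochain R sigma d0 i k)) // HS; last by lia.
  rewrite !pc_val //; lia.
pose c := fun m : nat => (alpha beta + ((i < m)%:R - (k < m)%:R) + (alpha beta + ((i < m)%:R - (k < m)%:R)
     + ((m == i)%:R - (m == k)%:R))) / 2.
rewrite (eq_bigr (fun m : 'I_(4 * g) =>
   c m * ((m : nat) == j)%:R - c m * ((m : nat) == l)%:R)); last first.
  by move=> m _; rewrite mulrBr.
rewrite sumrB !(@sum_delta _ _ c) /c; try lia.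
rewrite Hij.
have -> : (k < j)%N = false by lia.
have -> : (i < l)%N = true by lia.
have -> : (k < l)%N = true by lia.
have -> : (j == i) = false by lia.
have -> : (j == k) = false by lia.
have -> : (l == i) = false by lia.
have -> : (l == k) = false by lia.
change (true%:R : R) with (1 : R); change (false%:R : R) with (0 : R).
by field.
Qed.


Lemma revK g (a : arcT g) : rev_arc (rev_arc a) = a.
Proof. by case: a => x b; rewrite /rev_arc /= negbK. Qed.

Lemma rev_neq g (a : arcT g) : (a == rev_arc a) = false.
Proof. by case: a => x b; rewrite /rev_arc xpair_eqE eqxx /=; case: b. Qed.

Lemma pc_rev (R : realType) g (sigma : {perm arcT g}) d0 i k a :
  bd_arc sigma d0 k = rev_arc (bd_arc sigma d0 i) ->
  pair_cochain R sigma d0 i k (rev_arc a) = - pair_cochain R sigma d0 i k a.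
Proof.
move=> Hk; rewrite /pair_cochain Hk.
have Rinj : injective (@rev_arc g) by apply: (can_inj (@revK g)).
rewrite (inj_eq Rinj).
have -> : (rev_arc a == bd_arc sigma d0 i) = (a == rev_arc (bd_arc sigma d0 i)).
  by rewrite -{1}(revK (bd_arc sigma d0 i)) (inj_eq Rinj).
case: (eqVneq a (bd_arc sigma d0 i)) => [->|_].
  by case: (bd_arc sigma d0 i) => x b; rewrite /rev_arc /= xpair_eqE eqxx /=; case: b.
by case: (a == _); rewrite ?opprK ?oppr0.
Qed.

Lemma Phi_ext (R : realType) g (alpha : seq (arcT g) -> R) eta D f f' :
  (forall d x, f d x = f' d x) -> Phi alpha eta D f = Phi alpha eta D f'.
Proof.
by move=> H; rewrite /Phi; apply: eq_bigr => d _; apply: eq_bigr => x _; rewrite H.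
Qed.

Lemma Phi_face (R : realType) g (r : seq (arcT g)) (alpha : seq (arcT g) -> R) eta D L :
  Phi alpha eta D (face_chain r L) =
  \sum_(p <- L) p.2%:~R * Phi alpha eta D (walk_chain r p.1 r).
Proof.
elim: L => [|p L IH].
  rewrite big_nil /Phi big1 // => d _; rewrite big1 // => x _.
  by rewrite /face_chain big_nil mul0r.
rewrite big_cons -IH /Phi mulr_sumr -big_split; apply: eq_bigr => d _.
rewrite mulr_sumr -big_split; apply: eq_bigr => x _.
by rewrite /face_chain big_cons intrD intrM mulrDl mulrA.
Qed.

Lemma key (R : realType) (g : nat) (sigma : {perm arcT g})
  (d0 : arcT g) (i j k l : nat) (alpha : seq (arcT g) -> R)
  (gamma s : seq (arcT g)) L :
  (forall a b : arcT g, fconnect (face_succ sigma) a b) ->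
  (i < j)%N -> (j < k)%N -> (k < l)%N -> (l < 4 * g)%N ->
  bd_arc sigma d0 k = rev_arc (bd_arc sigma d0 i) ->
  bd_arc sigma d0 l = rev_arc (bd_arc sigma d0 j) ->
  (forall u v, pi_eqv (bd_word sigma d0) u v -> alpha u = alpha v) ->
  (forall (u : seq (arcT g)) (a : arcT g),
      alpha (rcons u a) - alpha u = pair_cochain R sigma d0 i k a) ->
  bounds (bd_word sigma d0) L gamma s ->
  (\sum_(p <- L) p.2)%:~R = walk_sum alpha (pair_cochain R sigma d0 j l) gamma s.
Proof.
move=> Hf Hij Hjk Hkl Hl Hk Hl' Hal Hinc Hb.
set r := bd_word sigma d0.
set eta := pair_cochain R sigma d0 j l.
set V := wverts gamma s ++ flatten [seq wverts p.1 r | p <- L].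
have Hcov : forall v, v \in V -> has (same_vertex r v) V.
  by move=> v Hv; apply/hasP; exists v => //; apply: sv_refl.
have Hr : forall u a, alpha (rcons u a) = alpha u + pair_cochain R sigma d0 i k a.
  by move=> u a; rewrite -(Hinc u a) addrC subrK.
have Hw : forall u v b, pi_eqv r u v -> alpha (rcons u b) = alpha (rcons v b).
  by move=> u v b E; rewrite !Hr (Hal u v E).
have Hrev : forall u a, alpha (rcons (rcons u a) (rev_arc a)) = alpha u.
  by move=> u a; rewrite !Hr pc_rev // -addrA subrr addr0.
have Heta : forall a, eta (rev_arc a) = - eta a by move=> a; apply: pc_rev.
rewrite -(@Phi_walk _ _ r alpha eta V) //; last first.
  by move=> v Hv; apply: Hcov; rewrite mem_cat Hv.
rewrite (@Phi_ext _ _ _ _ _ _ (face_chain r L)); last by move=> d x; rewrite Hb.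
rewrite Phi_face rmorph_sum /=; apply: eq_big_seq => p Hp.
rewrite Phi_walk //; last first.
  move=> v Hv; apply: Hcov; rewrite mem_cat; apply/orP; right.
  by apply/flattenP; exists (wverts p.1 r) => //; apply: map_f.
by rewrite /eta /r (face_value _ Hf Hij Hjk Hkl Hl Hinc) mulr1.
Qed.

Theorem proposition5p4 (R : realType) (g : nat) (sigma : {perm arcT g})
  (d0 : arcT g) (i j k l : nat) (alpha : seq (arcT g) -> R)
  (gamma s : seq (arcT g)) :
  (2 <= g)%N ->
  (* the single vertex: sigma is one cyclic order of all the arcs *)
  (forall a b : arcT g, fconnect sigma a b) ->
  (* the single face *)
  (forall a b : arcT g, fconnect (face_succ sigma) a b) ->
  (i < j)%N -> (j < k)%N -> (k < l)%N -> (l < 4 * g)%N ->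
  bd_arc sigma d0 k = rev_arc (bd_arc sigma d0 i) ->
  bd_arc sigma d0 l = rev_arc (bd_arc sigma d0 j) ->
  (* alpha is a potential on the vertices of \tilde G from which omega derives *)
  (forall u v, pi_eqv (bd_word sigma d0) u v -> alpha u = alpha v) ->
  (forall (u : seq (arcT g)) (a : arcT g),
      alpha (rcons u a) - alpha u = pair_cochain R sigma d0 i k a) ->
  (* c : the walk from gamma along s is closed in \tilde G *)
  pi_eqv (bd_word sigma d0) (gamma ++ s) gamma ->
  forall A : R,
    signed_area (bd_word sigma d0) gamma s A <->
    A = walk_sum alpha (pair_cochain R sigma d0 j l) gamma s.
Proof.
move=> _ _ Hf Hij Hjk Hkl Hl Hk Hl' Hal Hinc Hc A; split.
  by move=> [L [Hb ->]]; exact: (key Hf Hij Hjk Hkl Hl Hk Hl' Hal Hinc Hb).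
move=> ->; have [L Hb] := exists_bounds Hc.
by exists L; split => //; rewrite (key Hf Hij Hjk Hkl Hl Hk Hl' Hal Hinc Hb).
Qed.
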